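(* Let $\omega\in\Omega_0$, $N\ge2$, and let $\boldsymbol u=(\boldsymbol u(1),\dots,\boldsymbol u(N))$, $\boldsymbol u(j)=(a(j),b(j))^{\mathsf T}$, be an eigenvector of $\mathcal S_\omega|_{[1,N]}$ with eigenvalue $z$. (i) If $z\neq V_{22,\omega}(j)$ for all $j\in[1,N]$, then $a(1)a(N)\neq0$; if $z=V_{22,\omega}(1)$, then $a(N)\neq0$; if $z=V_{22,\omega}(N)$, then $a(1)\neq0$. Moreover, if $z\neq V_{22,\omega}(j)$ for all $j\in[2,N-1]$, then $z$ is a simple eigenvalue. (ii) If $z=V_{22,\omega}(m)$ for some $m\in[2,N-1]$, then the multiplicity of $z$ does not exceed $2$; if the multiplicity is $2$, then there exists an eigenvector whose component $a(N)$ is nonzero and there exists an eigenvector whose component $a(N)$ is zero.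
   Context: $(\Omega,\mathcal F,\nu,T)$ is ergodic and $f=(f_{ij}):\Omega\to M(2,\mathbb C)$ bounded measurable with self-adjoint values; $V_\omega(n)=f(T^n\omega)$ with entries $V_{ij,\omega}(n)$, and $J=\begin{pmatrix}1&0\\0&0\end{pmatrix}$. $\Omega_0$ is the set of $\omega\in\Omega$ such that $V_{12,\omega}(i)\neq0$ for all $i\in\mathbb Z$ and $V_{22,\omega}(i)\neq V_{22,\omega}(j)$ for all $i\neq j$. $\mathcal S_\omega|_{[1,N]}$ is the $2N\times2N$ block tridiagonal Hermitian matrix with diagonal blocks $V_\omega(1),\dots,V_\omega(N)$ and all off-diagonal blocks equal to $J$ (the restriction of $(\mathcal S_\omega\boldsymbol u)(n)=J\boldsymbol u(n+1)+J\boldsymbol u(n-1)+V_\omega(n)\boldsymbol u(n)$ to $[1,N]$ with Dirichlet boundary conditions). *)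

(* Defs.v *)
From HB Require Import structures.
From mathcomp Require Import all_boot all_order all_algebra.
From mathcomp Require Import sesquilinear.
Set Implicit Arguments. Unset Strict Implicit. Unset Printing Implicit Defensive.
Import Order.TTheory GRing.Theory Num.Theory.
Local Open Scope ring_scope.

(* Entry (k,l) of a 2x2 matrix, 0-based: k,l in {0,1}.
   Hence V_{12} = ent2 V 0 1 and V_{22} = ent2 V 1 1. *)
Definition ent2 (C : numClosedFieldType) (A : 'M[C]_2) (k l : nat) : C :=
  A (inord k) (inord l).

Definition Tpow (Omega : Type) (T Tinv : Omega -> Omega) (n : int) (w : Omega)
  : Omega :=
  match n with
  | Posz m => iter m T w
  | Negz m => iter m.+1 Tinv w
  end.

Definition Vom (C : numClosedFieldType) (Omega : Type) (T Tinv : Omega -> Omega)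
  (f : Omega -> 'M[C]_2) (w : Omega) (n : int) : 'M[C]_2 :=
  f (Tpow T Tinv n w).

Definition Omega0 (C : numClosedFieldType) (Omega : Type) (T Tinv : Omega -> Omega)
  (f : Omega -> 'M[C]_2) (w : Omega) : Prop :=
  (forall i : int, ent2 (Vom T Tinv f w i) 0 1 != 0) /\
  (forall i j : int, i != j ->
     ent2 (Vom T Tinv f w i) 1 1 != ent2 (Vom T Tinv f w j) 1 1).

(* Index p (0-based) corresponds to site p %/ 2 + 1 in [1,N] and
   component p %% 2 (0 = a, 1 = b).  Diagonal blocks V(1),...,V(N),
   off-diagonal (nearest neighbour) blocks J = diag(1,0), else 0. *)
Definition Smat (C : numClosedFieldType) (N : nat) (V : int -> 'M[C]_2)
  : 'M[C]_(N * 2) :=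
  \matrix_(p, q)
    (if (p %/ 2 == q %/ 2)%N then
       ent2 (V (p %/ 2).+1%N%:Z) (p %% 2)%N (q %% 2)%N
     else if (((p %/ 2).+1 == q %/ 2) || ((q %/ 2).+1 == p %/ 2))%N then
       (if ((p %% 2 == 0) && (q %% 2 == 0))%N then 1 else 0)
     else 0).

Definition coord_at (C : numClosedFieldType) (n : nat) (v : 'cV[C]_n) (p : nat)
  : C :=
  if insub p is Some i then v i 0 else 0.

(* u = (u(1),...,u(N)), u(j) = (a(j), b(j))^T ; j in [1,N] *)
Definition acomp (C : numClosedFieldType) (N : nat) (v : 'cV[C]_(N * 2)) (j : nat)
  : C := coord_at v (j.-1 * 2)%N.
Definition bcomp (C : numClosedFieldType) (N : nat) (v : 'cV[C]_(N * 2)) (j : nat)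
  : C := coord_at v (j.-1 * 2 + 1)%N.

Definition is_eigvec (C : numClosedFieldType) (n : nat) (A : 'M[C]_n) (z : C)
  (v : 'cV[C]_n) : Prop :=
  v != 0 /\ A *m v = z *: v.

(* (geometric) multiplicity of z as an eigenvalue of A: the dimension of
   {v column | A v = z v}.  mxalgebra's eigenspace works with row vectors
   (u *m B = z u), so we apply it to A^T. For Hermitian A it coincides with
   the algebraic multiplicity. *)
Definition eigmult (C : numClosedFieldType) (n : nat) (A : 'M[C]_n) (z : C) : nat :=
  \rank (eigenspace A^T z).

(* Main.v *)
Require Import Defs.
From HB Require Import structures.
From mathcomp Require Import all_boot all_order all_algebra.
From mathcomp Require Import sesquilinear.
From mathcomp Require Import zify ring.
From Stdlib Require Import Classical.
Import Order.TTheory GRing.Theory Num.Theory.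
Local Open Scope ring_scope.
Set Implicit Arguments. Unset Strict Implicit. Unset Printing Implicit Defensive.

Lemma sum_ind (C : numClosedFieldType) (N m : nat) (F : nat -> C) :
  \sum_(0 <= k < N) (if k == m then F k else 0) = if (m < N)%N then F m else 0.
Proof.
elim: N => [|N IH]; first by rewrite big_nil.
rewrite big_nat_recr //= IH.
case: (ltngtP m N) => h.
- have h1 : (m < N.+1)%N by lia.
  have h2 : (N == m) = false by apply/eqP; lia.
  by rewrite ?h1 ?h2 ?addr0.
- have h1 : (m < N.+1)%N = false by apply/negbTE; lia.
  have h2 : (N == m) = false by apply/eqP; lia.
  by rewrite ?h1 ?h2 ?addr0.
- by rewrite ?h ?ltnn ?eqxx ?ltnSn ?add0r.
Qed.

Lemma sum2 (C : numClosedFieldType) (N : nat) (G : nat -> C) :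
  \sum_(0 <= q < N * 2) G q = \sum_(0 <= k < N) (G (k * 2)%N + G (k * 2 + 1)%N).
Proof.
elim: N => [|N IH]; first by rewrite !big_nil.
rewrite [RHS]big_nat_recr //= -IH mulSn.
have -> : (2 + N * 2 = (N * 2).+1.+1)%N by lia.
rewrite big_nat_recr //= big_nat_recr //= -addrA; congr (_ + (G _ + G _)); lia.
Qed.

Lemma coord_in (C : numClosedFieldType) n (v : 'cV[C]_n) (q : 'I_n) :
  coord_at v q = v q 0.
Proof. by rewrite /coord_at valK. Qed.

Lemma coord_out (C : numClosedFieldType) n (v : 'cV[C]_n) (q : nat) :
  (n <= q)%N -> coord_at v q = 0.
Proof. by move=> h; rewrite /coord_at insubF // ltnNge h. Qed.
Lemma dm2 k r : (r < 2)%N -> ((k * 2 + r) %/ 2 = k)%N /\ ((k * 2 + r) %% 2 = r)%N.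
Proof. move=> h; split; lia. Qed.

Lemma pw (C : numClosedFieldType) (i k : nat) (x y : C) :
  (if i == k then x else if (i.+1 == k) || (k.+1 == i) then y else 0) =
  (if k == i then x else 0) + (if k == i.+1 then y else 0) + (if k.+1 == i then y else 0).
Proof.
have [e1|e1] := eqVneq k i; have [e2|e2] := eqVneq k i.+1;
 have [e3|e3] := eqVneq k.+1 i; have [e4|e4] := eqVneq i k;
 have [e5|e5] := eqVneq i.+1 k; rewrite /= ?addr0 ?add0r //; lia.
Qed.

Definition Sf (C : numClosedFieldType) (V : int -> 'M[C]_2) (p q : nat) : C :=
    (if (p %/ 2 == q %/ 2)%N then
       ent2 (V (p %/ 2).+1%N%:Z) (p %% 2)%N (q %% 2)%N
     else if (((p %/ 2).+1 == q %/ 2) || ((q %/ 2).+1 == p %/ 2))%N then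
       (if ((p %% 2 == 0) && (q %% 2 == 0))%N then 1 else 0)
     else 0).

Lemma Srow (C : numClosedFieldType) N (V : int -> 'M[C]_2) (u : 'cV[C]_(N*2)) (p : 'I_(N*2)) :
 (Smat N V *m u) p 0 = \sum_(0 <= q < N*2) Sf V p q * coord_at u q.
Proof.
rewrite mxE big_mkord; apply: eq_bigr => q _; by rewrite mxE coord_in.
Qed.

Definition Aof (C : numClosedFieldType) n (u : 'cV[C]_n) k := coord_at u (k * 2)%N.
Definition Bof (C : numClosedFieldType) n (u : 'cV[C]_n) k := coord_at u (k * 2 + 1)%N.

Lemma SfA (C : numClosedFieldType) (V : int -> 'M[C]_2) i k (a b : C) :
  Sf V (i*2) (k*2) * a + Sf V (i*2) (k*2+1) * b =
  (if k == i then ent2 (V i.+1%:Z) 0 0 * a + ent2 (V i.+1%:Z) 0 1 * b else 0)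
  + (if k == i.+1 then a else 0) + (if k.+1 == i then a else 0).
Proof.
rewrite /Sf.
have -> : ((i*2) %/ 2 = i)%N by lia.
have -> : ((k*2) %/ 2 = k)%N by lia.
have -> : ((k*2+1) %/ 2 = k)%N by lia.
have -> : ((i*2) %% 2 = 0)%N by lia.
have -> : ((k*2) %% 2 = 0)%N by lia.
have -> : ((k*2+1) %% 2 = 1)%N by lia.
rewrite /=.
have [e1|e1] := eqVneq k i; have [e2|e2] := eqVneq k i.+1;
 have [e3|e3] := eqVneq k.+1 i; have [e4|e4] := eqVneq i k;
 have [e5|e5] := eqVneq i.+1 k; rewrite /= ?mul0r ?mul1r ?addr0 ?add0r //;
 try lia; by subst.
Qed.

Lemma SfB (C : numClosedFieldType) (V : int -> 'M[C]_2) i k (a b : C) :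
  Sf V (i*2+1) (k*2) * a + Sf V (i*2+1) (k*2+1) * b =
  (if k == i then ent2 (V i.+1%:Z) 1 0 * a + ent2 (V i.+1%:Z) 1 1 * b else 0).
Proof.
rewrite /Sf.
have -> : ((i*2+1) %/ 2 = i)%N by lia.
have -> : ((k*2) %/ 2 = k)%N by lia.
have -> : ((k*2+1) %/ 2 = k)%N by lia.
have -> : ((i*2+1) %% 2 = 1)%N by lia.
have -> : ((k*2) %% 2 = 0)%N by lia.
have -> : ((k*2+1) %% 2 = 1)%N by lia.
rewrite /=.
have [e1|e1] := eqVneq k i; have [e4|e4] := eqVneq i k;
 rewrite /= ?mul0r ?mul1r ?addr0 ?add0r //; try lia; try by subst.
by case: ifP => _; rewrite !mul0r addr0.
Qed.

Lemma sum_prev (C : numClosedFieldType) (N i : nat) (F : nat -> C) :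
  \sum_(0 <= k < N) (if k.+1 == i then F k else 0) =
  if i is i'.+1 then (if (i' < N)%N then F i' else 0) else 0.
Proof.
case: i => [|i']; first by rewrite big1.
under eq_bigr do rewrite eqSS. exact: sum_ind.
Qed.

Lemma eqE1 (C : numClosedFieldType) N (V : int -> 'M[C]_2) (u : 'cV[C]_(N*2)) z :
  Smat N V *m u = z *: u -> forall i, (i < N)%N ->
  (if i is i'.+1 then Aof u i' else 0) + Aof u i.+1
  + ent2 (V i.+1%:Z) 0 0 * Aof u i + ent2 (V i.+1%:Z) 0 1 * Bof u i = z * Aof u i.
Proof.
move=> he i hi. have hp : (i*2 < N*2)%N by lia.
have := congr1 (fun M : 'M[C]_(N*2,1) => M (Ordinal hp) 0) he.
rewrite Srow [RHS]mxE -(coord_in u (Ordinal hp)) /= sum2.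
under eq_bigr do rewrite SfA.
rewrite !big_split /= sum_ind sum_ind sum_prev hi => <-.
rewrite /Aof /Bof.
case: i hi hp => [|i] hi hp /=.
  case: ifP => h; last rewrite (coord_out u (_ : N*2 <= 1*2)%N); try lia; ring.
rewrite (ltn_trans (ltnSn i) hi).
case: ifP => h; last rewrite (coord_out u (_ : N*2 <= i.+2*2)%N); try lia; ring.
Qed.

Lemma eqE2 (C : numClosedFieldType) N (V : int -> 'M[C]_2) (u : 'cV[C]_(N*2)) z :
  Smat N V *m u = z *: u -> forall i, (i < N)%N ->
  ent2 (V i.+1%:Z) 1 0 * Aof u i + ent2 (V i.+1%:Z) 1 1 * Bof u i = z * Bof u i.
Proof.
move=> he i hi. have hp : (i*2+1 < N*2)%N by lia.
have := congr1 (fun M : 'M[C]_(N*2,1) => M (Ordinal hp) 0) he.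
rewrite Srow [RHS]mxE -(coord_in u (Ordinal hp)) /= sum2.
under eq_bigr do rewrite SfB.
by rewrite sum_ind hi.
Qed.
Section Chain.
Variables (C : numClosedFieldType) (N : nat) (A B d11 d12 d21 d22 : nat -> C) (z : C).
Hypothesis E1 : forall i, (i < N)%N ->
  (if i is i'.+1 then A i' else 0) + A i.+1 + d11 i * A i + d12 i * B i = z * A i.
Hypothesis E2 : forall i, (i < N)%N -> d21 i * A i + d22 i * B i = z * B i.
Hypothesis Aout : forall j, (N <= j)%N -> A j = 0.
Hypothesis h12 : forall i, d12 i != 0.
Hypothesis hN : (2 <= N)%N.

Lemma Bzero i : (i < N)%N -> z != d22 i -> A i = 0 -> B i = 0.
Proof.
move=> hi hz hA; have := E2 hi; rewrite hA mulr0 add0r => /eqP.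
rewrite -subr_eq0 -mulrBl mulf_eq0 subr_eq0 eq_sym (negPf hz) /=.
by move/eqP.
Qed.

Lemma Bfix m : (m < N)%N -> A m = 0 -> A m.+1 = 0 -> (m = 0%N \/ A m.-1 = 0) -> B m = 0.
Proof.
move=> hm h0 h1 h2; have := E1 hm; rewrite h0 h1 !mulr0 addr0.
have -> : (if m is i'.+1 then A i' else 0) = 0 by case: m {hm h0 h1} h2 => [|m] [].
rewrite ?add0r ?addr0 => /eqP; rewrite mulf_eq0 (negPf (h12 m)) /=; by move/eqP.
Qed.

Lemma fwd k : (k <= N)%N -> A 0 = 0 -> (forall i, (i < k)%N -> z != d22 i) ->
  forall j, (j <= k)%N -> A j = 0.
Proof.
move=> + h0; elim: k => [|k IH] hk hz j hj.
  by have -> : j = 0%N by lia.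
have IH' : forall j, (j <= k)%N -> A j = 0.
  by apply: IH; [lia | move=> i hi; apply: hz; lia].
case: (ltnP j k.+1) => hjk; first by apply: IH'; lia.
have -> : j = k.+1 by lia.
have hkN : (k < N)%N by lia.
have hB : B k = 0 by apply: Bzero => //; [apply: hz | apply: IH'].
have := E1 hkN; rewrite hB (IH' k) // !mulr0 !addr0.
have -> : (if k is i'.+1 then A i' else 0) = 0 by case: k IH' {IH hk hz hj hjk hkN hB} => // k IH'; apply: IH'; lia.
by rewrite add0r.
Qed.

Lemma bwd k : (k < N)%N -> A N.-1 = 0 -> (forall i, (N - k <= i < N)%N -> z != d22 i) ->
  forall j, (N.-1 - k <= j)%N -> A j = 0.
Proof.
move=> + h0; elim: k => [|k IH] hk hz j hj.
  case: (ltnP j N) => h; last exact: Aout.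
  by have -> : j = N.-1 by lia.
have IH' : forall j, (N.-1 - k <= j)%N -> A j = 0.
  by apply: IH; [lia | move=> i hi; apply: hz; lia].
case: (ltnP j (N.-1 - k)) => hjk; last exact: IH'.
have -> : j = (N - k.+2)%N by lia.
set t := (N - k.+2)%N.
have htN : (t.+1 < N)%N by rewrite /t; lia.
have hB : B t.+1 = 0 by apply: Bzero => //; [apply: hz; rewrite /t; lia | apply: IH'; rewrite /t; lia].
have := E1 htN; rewrite hB (IH' t.+1) ?(IH' t.+2) ?mulr0 ?addr0 //; rewrite /t; lia.
Qed.

Lemma allzero m : (m < N)%N -> (forall i, (i < N)%N -> i != m -> z != d22 i) ->
  (m = 0%N \/ A 0 = 0) -> (m = N.-1 \/ A N.-1 = 0) ->
  forall j, (j < N)%N -> A j = 0 /\ B j = 0.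
Proof.
move=> hm hz hl hr.
have hAl : forall j, (j <= m)%N -> A j = 0.
  case: hl => [hm0|hA0].
  - case: hr => [|hAN]; first lia.
    move=> j _; apply: (@bwd N.-1) => //; try lia.
    move=> i hi; apply: hz; lia.
  - apply: fwd => //; first lia. move=> i hi; apply: hz; lia.
have hAr : forall j, (m <= j)%N -> A j = 0.
  case: hr => [hmN|hAN].
  - case: hl => [|hA0]; first lia.
    move=> j hj; case: (ltnP j N) => h; last exact: Aout.
    apply: (@fwd N.-1) => //; try lia. move=> i hi; apply: hz; lia.
  - move=> j hj; apply: (@bwd (N.-1 - m)) => //; try lia.
    move=> i hi; apply: hz; lia.
have hA : forall j, A j = 0 by move=> j; case: (leqP j m) => h; [apply: hAl | apply: hAr; lia].
move=> j hj; split => //.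
have [->|hjm] := eqVneq j m.
  by apply: Bfix => //; right.
by apply: Bzero => //; apply: hz.
Qed.

End Chain.
Definition cmat {F : fieldType} n k (qs : 'I_k -> 'I_n) : 'M[F]_(n, k) :=
  \matrix_(i, j) (if i == qs j then 1 else 0).

Lemma cmatE (F : fieldType) n k (qs : 'I_k -> 'I_n) (x : 'rV[F]_n) j :
  (x *m cmat qs) 0 j = x 0 (qs j).
Proof.
rewrite mxE (bigD1 (qs j)) //= mxE eqxx mulr1 big1 ?addr0 // => i /negPf hi.
by rewrite mxE hi mulr0.
Qed.

Lemma rank_bound (F : fieldType) n (S : 'M[F]_n) z k (qs : 'I_k -> 'I_n) :
  (forall u : 'cV[F]_n, S *m u = z *: u -> (forall j, u (qs j) 0 = 0) -> u = 0) ->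
  (\rank (eigenspace S^T z) <= k)%N.
Proof.
move=> hyp.
rewrite -(mxrank_mul_ker (eigenspace S^T z) (cmat qs)).
have -> : \rank (eigenspace S^T z :&: kermx (cmat qs))%MS = 0%N.
  apply/eqP; rewrite mxrank_eq0; apply/eqP/row_matrixP => r; rewrite row0.
  have := row_sub r (eigenspace S^T z :&: kermx (cmat qs))%MS.
  set x := row r _.
  rewrite sub_capmx => /andP [/eigenspaceP hE /sub_kermxP hK].
  have hx : x^T = 0.
    apply: hyp.
      by apply: trmx_inj; rewrite trmx_mul !trmxK hE linearZ /= trmxK.
    move=> j; rewrite mxE -cmatE hK mxE //.
  by rewrite -(trmxK x) hx trmx0.
by rewrite addn0 rank_leq_col.
Qed.

Lemma rank_ge1 (F : fieldType) n (S : 'M[F]_n) z (u : 'cV[F]_n) :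
  u != 0 -> S *m u = z *: u -> (0 < \rank (eigenspace S^T z))%N.
Proof.
move=> hu hS.
have : (u^T <= eigenspace S^T z)%MS.
  by apply/eigenspaceP; rewrite -trmx_mul hS linearZ.
move/mxrankS; rewrite rank_rV.
have -> : (u^T != 0) by apply: contra hu => /eqP h; rewrite -(trmxK u) h trmx0.
by [].
Qed.

Lemma vec0 (C : numClosedFieldType) N (u : 'cV[C]_(N*2)) :
  (forall j, (j < N)%N -> Aof u j = 0 /\ Bof u j = 0) -> u = 0.
Proof.
move=> h; apply/matrixP => q j; rewrite (ord1 j) !mxE -coord_in.
have hq := ltn_ord q.
have hk : (q %/ 2 < N)%N by lia.
have [hA hB] := h _ hk.
have : (q %% 2 < 2)%N by lia.
case hr: (q %% 2)%N => [|[|r]] // _.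
- by have -> : (q : nat) = (q %/ 2 * 2)%N by lia.
- by have -> : (q : nat) = (q %/ 2 * 2 + 1)%N by lia.
Qed.

Theorem lemma5p7 (C : numClosedFieldType) (Omega : Type)
  (T Tinv : Omega -> Omega) (f : Omega -> 'M[C]_2)
  (hT1 : cancel T Tinv) (hT2 : cancel Tinv T)
  (hf_sa : forall x, f x \is hermsymmx)
  (hf_bdd : exists M : C, forall x i j, `|f x i j| <= M)
  (w : Omega) (hw : Omega0 T Tinv f w)
  (N : nat) (hN : (2 <= N)%N) (z : C) (u : 'cV[C]_(N * 2))
  (hu : is_eigvec (Smat N (Vom T Tinv f w)) z u) :
  let V22 := fun j : nat => ent2 (Vom T Tinv f w j%:Z) 1 1 in
  let S := Smat N (Vom T Tinv f w) in
  (* (i) *)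
  (((forall j : nat, (1 <= j <= N)%N -> z != V22 j) ->
      acomp u 1 * acomp u N != 0)
   /\ (z = V22 1%N -> acomp u N != 0)
   /\ (z = V22 N -> acomp u 1 != 0)
   /\ ((forall j : nat, (2 <= j <= N.-1)%N -> z != V22 j) ->
      eigmult S z = 1%N))
  /\
  (* (ii) *)
  (forall m : nat, (2 <= m <= N.-1)%N -> z = V22 m ->
     (eigmult S z <= 2)%N /\
     (eigmult S z = 2%N ->
        (exists v, is_eigvec S z v /\ acomp v N != 0) /\
        (exists v, is_eigvec S z v /\ acomp v N = 0))).
Proof.
move=> V22 S.
set V := Vom T Tinv f w.
have [hu0 hSu] := hu.
pose d22 := fun i : nat => ent2 (V i.+1%:Z) 1 1.
have hV22 : forall j, V22 j.+1 = d22 j by [].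
have hdist : forall i m, i != m -> d22 i != d22 m.
  move=> i m him; apply: hw.2; apply: contra him => /eqP [] ->; exact: eqxx.
have hzne : forall m, z = d22 m -> forall i, i != m -> z != d22 i.
  by move=> m -> i him; rewrite eq_sym; apply: hdist.
have key : forall v, S *m v = z *: v -> forall m, (m < N)%N ->
    (forall i, (i < N)%N -> i != m -> z != d22 i) ->
    (m = 0%N \/ Aof v 0 = 0) -> (m = N.-1 \/ Aof v N.-1 = 0) -> v = 0.
  move=> v hv m hm hz hl hr; apply: vec0.
  apply: (@allzero C N (Aof v) (Bof v) (fun i => ent2 (V i.+1%:Z) 0 0)
     (fun i => ent2 (V i.+1%:Z) 0 1) (fun i => ent2 (V i.+1%:Z) 1 0) d22 z
     (eqE1 hv) (eqE2 hv) _ _ hN m) => //.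
  - by move=> j hj; rewrite /Aof coord_out //; lia.
  - by move=> i; apply: hw.1.
have p0lt : (0 < N * 2)%N by lia.
have pNlt : (N.-1 * 2 < N * 2)%N by lia.
pose p0 : 'I_(N*2) := Ordinal p0lt.
pose pN : 'I_(N*2) := Ordinal pNlt.
have eA0 : forall v : 'cV[C]_(N*2), v p0 0 = Aof v 0 by move=> v; rewrite -coord_in.
have eAN : forall v : 'cV[C]_(N*2), v pN 0 = Aof v N.-1 by move=> v; rewrite -coord_in.
have ge1 : (0 < eigmult S z)%N by apply: rank_ge1 hu0 hSu.
have le1_a1 : (forall v, S *m v = z *: v -> Aof v 0 = 0 -> v = 0) -> (eigmult S z <= 1)%N.
  move=> h; apply: (@rank_bound _ _ S z 1 (fun _ => p0)) => v hv hj.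
  by apply: h => //; rewrite -eA0; apply: (hj ord0).
have le1_aN : (forall v, S *m v = z *: v -> Aof v N.-1 = 0 -> v = 0) -> (eigmult S z <= 1)%N.
  move=> h; apply: (@rank_bound _ _ S z 1 (fun _ => pN)) => v hv hj.
  by apply: h => //; rewrite -eAN; apply: (hj ord0).
have hNp : N = N.-1.+1 by lia.
split.
  split.
    move=> hz; rewrite mulf_eq0 negb_or; apply/andP; split; apply/eqP => h0;
      move/eqP: hu0; apply.
    - apply: (key u hSu N.-1);  [lia | | by right | by left].
      move=> i hi _; rewrite -hV22; apply: hz; lia.
    - apply: (key u hSu 0%N);  [lia | | by left | by right].
      move=> i hi _; rewrite -hV22; apply: hz; lia.
  split.
    move=> hz; apply/eqP => h0; move/eqP: hu0; apply.
    apply: (key u hSu 0%N);  [lia | | by left | by right].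
    by move=> i _; apply: (hzne 0%N hz).
  split.
    move=> hz; apply/eqP => h0; move/eqP: hu0; apply.
    have hz' : z = d22 N.-1 by rewrite hz hNp.
    apply: (key u hSu N.-1);  [lia | | by right | by left].
    by move=> i _; apply: (hzne _ hz').
  move=> hz; apply/eqP; rewrite eqn_leq ge1 andbT.
  have [hz0|hz0] := eqVneq z (d22 0%N).
    apply: le1_aN => v hv h0; apply: (key v hv 0%N);  [lia | | by left | by right].
    by move=> i _; apply: (hzne _ hz0).
  apply: le1_a1 => v hv h0; apply: (key v hv N.-1);  [lia | | by right | by left].
  move=> i hi hin.
  case: i hi hin => [|i] hi hin //.
  rewrite -hV22; apply: hz; lia.
move=> m hm hz.
have hz' : z = d22 m.-1 by rewrite hz -hV22; congr V22; lia.
have inj2 : forall v, S *m v = z *: v -> Aof v 0 = 0 -> Aof v N.-1 = 0 -> v = 0.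
  move=> v hv h0 hN1; apply: (key v hv m.-1);  [lia | | by right | by right].
  by move=> i _; apply: (hzne _ hz').
split.
  pose qs := fun j : 'I_2 => if j == ord0 then p0 else pN.
  apply: (@rank_bound _ _ S z 2 qs) => v hv hj.
  apply: inj2 => //.
  - by rewrite -eA0; apply: (hj ord0).
  - by rewrite -eAN; apply: (hj ord_max).
move=> h2; split.
  case: (classic (exists v, is_eigvec S z v /\ acomp v N != 0)) => // hno.
  have : (eigmult S z <= 1)%N.
    apply: le1_a1 => v hv h0; apply/eqP; apply/negPn/negP => hv0.
    apply: hno; exists v; split; first by split.
    apply/eqP => hN0; move/eqP: hv0; apply; exact: inj2.
  by rewrite h2.
case: (classic (exists v, is_eigvec S z v /\ acomp v N = 0)) => // hno.
have : (eigmult S z <= 1)%N.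
  apply: le1_aN => v hv h0; apply/eqP; apply/negPn/negP => hv0.
  by apply: hno; exists v; split; first by split.
by rewrite h2.
Qed.
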